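(* Let $\theta>0$ and consider the Hoppe tree with parameter $\theta$. For $n\ge2$ let $\mathcal G_{n-1}=\sigma(J_1,\dots,J_{n-2})$ (the $\sigma$-field generated by the Hoppe tree with $n-1$ vertices). (1) For $n\ge2$, $$\mathbb E[T_n\mid\mathcal G_{n-1}]=\tfrac{\theta+n-1}{\theta+n-2}T_{n-1}+1,\qquad \mathbb E[R_n\mid\mathcal G_{n-1}]=\tfrac{\theta+n}{\theta+n-2}R_{n-1}+\tfrac{1}{\theta+n-2}T_{n-1},$$ $$\mathbb E[U_n\mid\mathcal G_{n-1}]=\tfrac{\theta+n}{\theta+n-2}U_{n-1}+\tfrac{1}{\theta+n-2}T_{n-1}+1,\qquad \mathbb E[W_n\mid\mathcal G_{n-1}]=\tfrac{\theta+n}{\theta+n-2}W_{n-1}+\tfrac{\theta-1}{\theta+n-2}T_{n-1}+n-1.$$ (2) For $n\ge1$, $$\mathbb E T_n=(\theta+n-1)h_n^\theta=n\log n-\Psi(\theta+1)n+(\theta-1)\log n+O(1),$$ and for $n\ge2$, $$\mathbb E U_n=(\theta+n)(\theta+n-1)\Big[\tfrac{2}{1+\theta}-\tfrac{1}{\theta+n-1}-\tfrac{1}{\theta+n}\big(1+h_{n-1}^\theta\big)\Big]=\tfrac{2}{1+\theta}n^2-n\log n+O(n),$$ $$\mathbb E W_n=(\theta+n)(\theta+n-1)\Big[(\theta-1)\Big(\tfrac{1}{\theta+1}-\tfrac{1}{\theta+n-1}-\tfrac{h_{n-1}^\theta}{\theta+n}\Big)+h_n^\theta-1+\tfrac{\theta+1}{\theta+n}\Big]=n^2\log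 n-\Big[\Psi(\theta+1)+\tfrac{2}{\theta+1}\Big]n^2+\theta\,n\log n+O(n),$$ where the $O(\cdot)$ terms refer to $n\to\infty$ with $\theta$ fixed.
   Context: Let $(J_k)_{k\ge1}$ be independent with $\Pr(J_k=0)=\frac{\theta}{\theta+k-1}$ and $\Pr(J_k=i)=\frac{1}{\theta+k-1}$ for $i\in\{1,\dots,k-1\}$. The Hoppe tree with $n$ vertices has vertex set $\{0,\dots,n-1\}$, root $0$, and parent of $k\ge1$ equal to $J_k$. $D_k$ is the depth of vertex $k$, $D_{ij}$ the depth of the last common ancestor of $i$ and $j$ ($D_{kk}=D_k$). $T_n=\sum_{k=0}^{n-1}D_k$, $R_n=\sum_{0\le i<j\le n-1}D_{ij}$, $U_n=T_n+2R_n$, $W_n=\sum_{0\le i<j\le n-1}\operatorname{dist}(i,j)$ (Wiener index). $h_n^\theta=\sum_{j=1}^{n-1}\frac{1}{\theta+j}$ (so $h_1^\theta=0$), and $\Psi$ is the digamma function. *)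

(* Defs.v *)
From Stdlib Require Import Reals Lra Lia Arith List ClassicalEpsilon.
Open Scope R_scope.

Fixpoint rsum (n : nat) (f : nat -> R) : R :=
  match n with
  | O => 0
  | S m => rsum m f + f m
  end.

(* A configuration J : nat -> nat encodes the parent choices J_1, J_2, ...
   (only J_k for 1 <= k <= n-1 matter for the tree on n vertices). *)

(* Depth of vertex k, computed with fuel (fuel k suffices since J_k < k). *)
Fixpoint dep_f (fuel : nat) (J : nat -> nat) (k : nat) : nat :=
  match fuel with
  | O => O
  | S f => match k with
           | O => O
           | S _ => S (dep_f f J (J k))
           end
  end.

Definition depth (J : nat -> nat) (k : nat) : nat := dep_f k J k.

Fixpoint anc_f (fuel : nat) (J : nat -> nat) (a k : nat) : bool :=
  orb (Nat.eqb a k)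
  match fuel with
  | O => false
  | S f => match k with
           | O => false
           | S _ => anc_f f J a (J k)
           end
  end.

Definition is_anc (J : nat -> nat) (a k : nat) : bool := anc_f k J a k.

(* D_{ij}: depth of the last (deepest) common ancestor of i and j.
   Every ancestor of i has label <= i. *)
Definition lca_depth (J : nat -> nat) (i j : nat) : nat :=
  fold_right Nat.max O
    (map (depth J) (filter (fun a => andb (is_anc J a i) (is_anc J a j)) (seq 0 (S i)))).

(* Tree distance: length of the unique path i -> lca(i,j) -> j. *)
Definition tdist (J : nat -> nat) (i j : nat) : nat :=
  (depth J i - lca_depth J i j) + (depth J j - lca_depth J i j).

(* T_n, R_n, U_n, W_n for the tree with vertices 0..n-1. *)
Definition Tn (n : nat) (J : nat -> nat) : R :=
  rsum n (fun k => INR (depth J k)).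
Definition Rn (n : nat) (J : nat -> nat) : R :=
  rsum n (fun j => rsum j (fun i => INR (lca_depth J i j))).
Definition Un (n : nat) (J : nat -> nat) : R := Tn n J + 2 * Rn n J.
Definition Wn (n : nat) (J : nat -> nat) : R :=
  rsum n (fun j => rsum j (fun i => INR (tdist J i j))).

Definition pJ (theta : R) (k i : nat) : R :=
  if Nat.eqb i 0 then theta / (theta + INR k - 1) else 1 / (theta + INR k - 1).

Definition upd (J : nat -> nat) (k v : nat) : nat -> nat :=
  fun x => if Nat.eqb x k then v else J x.

(* Ex theta m F = E[F(J_1,...,J_m)] for independent J_k with law pJ theta k
   (J_k ranges over {0,...,k-1}). *)
Fixpoint Ex (theta : R) (m : nat) (F : (nat -> nat) -> R) : R :=
  match m with
  | O => F (fun _ => O)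
  | S m' => Ex theta m' (fun J => rsum (S m') (fun i => pJ theta (S m') i * F (upd J (S m') i)))
  end.

(* Conditional expectation E[F(J_1..J_{n-1}) | G_{n-1}], G_{n-1} = sigma(J_1..J_{n-2}),
   evaluated at the configuration J of (J_1,...,J_{n-2}). *)
Definition condE (theta : R) (n : nat) (F : (nat -> nat) -> R) (J : nat -> nat) : R :=
  rsum (n - 1) (fun i => pJ theta (n - 1) i * F (upd J (n - 1) i)).

(* Valid configuration of (J_1,...,J_m): J_k in {0,...,k-1}; every such value
   has positive probability, so this is the support of the law. *)
Definition valid (m : nat) (J : nat -> nat) : Prop :=
  forall k, (1 <= k <= m)%nat -> (J k < k)%nat.

Definition h (theta : R) (n : nat) : R :=
  rsum (n - 1) (fun j => 1 / (theta + INR (S j))).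

(* Digamma function, via Gauss' limit formula
   Psi(x) = lim_{N->oo} ( ln N - sum_{k=0}^{N-1} 1/(x+k) ),  x > 0. *)
Definition Psi (x : R) : R :=
  epsilon (inhabits 0)
    (fun l => Un_cv (fun N => ln (INR N) - rsum N (fun k => / (x + INR k))) l).

(* Main.v *)
Require Import Defs.
From Stdlib Require Import Reals Lra Lia Arith List ClassicalEpsilon.
Open Scope R_scope.

Lemma valid_le m m' J : (m' <= m)%nat -> valid m J -> valid m' J.
Proof. intros H HV k Hk; apply HV; lia. Qed.

Lemma dep_f_eq J : forall f g k, valid k J -> (k <= f)%nat -> (k <= g)%nat ->
  dep_f f J k = dep_f g J k.
Proof.
  induction f as [|f IH]; intros g k HV Hf Hg.
  - assert (k = 0%nat) by lia; subst. destruct g; reflexivity.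
  - destruct k as [|k']. { destruct g; reflexivity. }
    destruct g as [|g]; [lia|]. simpl.
    assert (HJ : (J (S k') < S k')%nat) by (apply HV; lia).
    f_equal. apply IH; [apply (valid_le (S k')); [lia|assumption]|lia|lia].
Qed.

Lemma depth_0 J : depth J 0 = 0%nat.
Proof. reflexivity. Qed.

Lemma depth_S J k : valid k J -> (0 < k)%nat -> depth J k = S (depth J (J k)).
Proof.
  intros HV Hk. unfold depth. destruct k as [|k']; [lia|].
  simpl. f_equal. assert (HJ : (J (S k') < S k')%nat) by (apply HV; lia).
  apply dep_f_eq; [apply (valid_le (S k')); [lia|assumption]|lia|lia].
Qed.

Lemma anc_f_eq J a : forall f g k, valid k J -> (k <= f)%nat -> (k <= g)%nat ->
  anc_f f J a k = anc_f g J a k.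
Proof.
  induction f as [|f IH]; intros g k HV Hf Hg.
  - assert (k = 0%nat) by lia; subst. destruct g; reflexivity.
  - destruct k as [|k']. { destruct g; reflexivity. }
    destruct g as [|g]; [lia|]. simpl.
    assert (HJ : (J (S k') < S k')%nat) by (apply HV; lia).
    f_equal. apply IH; [apply (valid_le (S k')); [lia|assumption]|lia|lia].
Qed.

Lemma anc_0 J a : is_anc J a 0 = Nat.eqb a 0.
Proof. unfold is_anc; simpl. destruct (Nat.eqb a 0); reflexivity. Qed.

Lemma anc_S J a k : valid k J -> (0 < k)%nat ->
  is_anc J a k = orb (Nat.eqb a k) (is_anc J a (J k)).
Proof.
  intros HV Hk. unfold is_anc. destruct k as [|k']; [lia|].
  simpl. f_equal. assert (HJ : (J (S k') < S k')%nat) by (apply HV; lia).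
  apply anc_f_eq; [apply (valid_le (S k')); [lia|assumption]|lia|lia].
Qed.

Lemma strong_ind (P : nat -> Prop) :
  (forall k, (forall j, (j < k)%nat -> P j) -> P k) -> forall k, P k.
Proof.
  intros H k. assert (forall N j, (j < N)%nat -> P j) as G.
  { induction N; intros j Hj; [lia|]. apply H. intros i Hi. apply IHN. lia. }
  apply (G (S k)). lia.
Qed.

Lemma anc_le J a k : valid k J -> is_anc J a k = true -> (a <= k)%nat.
Proof.
  revert a. induction k as [k IH] using strong_ind. intros a HV H.
  destruct k as [|k'].
  - rewrite anc_0 in H. apply Nat.eqb_eq in H. lia.
  - rewrite anc_S in H by (auto; lia). apply Bool.orb_true_iff in H.
    destruct H as [H|H]. { apply Nat.eqb_eq in H. lia. }
    assert (HJ : (J (S k') < S k')%nat) by (apply HV; lia).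
    assert (a <= J (S k'))%nat; [|lia].
    apply IH; auto. apply (valid_le (S k')); [lia|assumption].
Qed.

Lemma depth_mono J a k : valid k J -> is_anc J a k = true -> (depth J a <= depth J k)%nat.
Proof.
  revert a. induction k as [k IH] using strong_ind. intros a HV H.
  destruct k as [|k'].
  - rewrite anc_0 in H. apply Nat.eqb_eq in H. subst. lia.
  - rewrite anc_S in H by (auto; lia). apply Bool.orb_true_iff in H.
    destruct H as [H|H]. { apply Nat.eqb_eq in H. subst. lia. }
    assert (HJ : (J (S k') < S k')%nat) by (apply HV; lia).
    rewrite (depth_S J (S k')) by (auto; lia).
    assert (depth J a <= depth J (J (S k')))%nat; [|lia].
    apply IH; auto. apply (valid_le (S k')); [lia|assumption].
Qed.

Lemma anc_refl J k : is_anc J k k = true.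
Proof. unfold is_anc. destruct k; [reflexivity|]. simpl. rewrite Nat.eqb_refl. reflexivity. Qed.

Lemma valid_upd m J p : valid m J -> (p <= m)%nat -> valid (S m) (upd J (S m) p).
Proof.
  intros HV Hp k Hk. unfold upd. destruct (Nat.eqb_spec k (S m)). lia. apply HV; lia.
Qed.

Lemma depth_upd m J p k : valid m J -> (k <= m)%nat -> depth (upd J (S m) p) k = depth J k.
Proof.
  intros HV. revert k. induction k as [k IH] using strong_ind. intros Hk.
  destruct k as [|k']; [reflexivity|].
  assert (HV' : valid (S k') (upd J (S m) p)).
  { intros j Hj. unfold upd. destruct (Nat.eqb_spec j (S m)); [lia|]. apply HV; lia. }
  rewrite depth_S by (auto; lia). rewrite (depth_S J) by (try lia; apply (valid_le m); auto; lia).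
  unfold upd at 2. destruct (Nat.eqb_spec (S k') (S m)); [lia|].
  f_equal. apply IH. apply HV; lia. assert (J (S k') < S k')%nat by (apply HV; lia). lia.
Qed.

Lemma depth_new m J p : valid m J -> (p <= m)%nat ->
  depth (upd J (S m) p) (S m) = S (depth J p).
Proof.
  intros HV Hp. rewrite depth_S by (try apply valid_upd; auto; lia).
  unfold upd at 2. rewrite Nat.eqb_refl. f_equal. apply depth_upd; auto.
Qed.

Lemma anc_upd m J p a k : valid m J -> (k <= m)%nat -> is_anc (upd J (S m) p) a k = is_anc J a k.
Proof.
  intros HV. revert k. induction k as [k IH] using strong_ind. intros Hk.
  destruct k as [|k']; [rewrite !anc_0; reflexivity|].
  assert (HV' : valid (S k') (upd J (S m) p)).
  { intros j Hj. unfold upd. destruct (Nat.eqb_spec j (S m)); [lia|]. apply HV; lia. }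
  rewrite anc_S by (auto; lia). rewrite (anc_S J) by (try lia; apply (valid_le m); auto; lia).
  unfold upd at 2. destruct (Nat.eqb_spec (S k') (S m)); [lia|].
  f_equal. apply IH. apply HV; lia. assert (J (S k') < S k')%nat by (apply HV; lia). lia.
Qed.

Lemma anc_new m J p a : valid m J -> (p <= m)%nat ->
  is_anc (upd J (S m) p) a (S m) = orb (Nat.eqb a (S m)) (is_anc J a p).
Proof.
  intros HV Hp. rewrite anc_S by (try apply valid_upd; auto; lia).
  unfold upd at 2. rewrite Nat.eqb_refl. f_equal. apply anc_upd; auto.
Qed.

Lemma fold_le (l : list nat) b : (forall x, In x l -> (x <= b)%nat) -> (fold_right Nat.max 0 l <= b)%nat.
Proof.
  induction l as [|x l IH]; intros H; simpl; [lia|].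
  assert (x <= b)%nat by (apply H; left; auto).
  assert (fold_right Nat.max 0 l <= b)%nat by (apply IH; intros; apply H; right; auto). lia.
Qed.

Lemma fold_ge (l : list nat) b : In b l -> (b <= fold_right Nat.max 0 l)%nat.
Proof.
  induction l as [|x l IH]; intros H; simpl; [destruct H|].
  destruct H as [H|H]; [subst; lia|]. specialize (IH H). lia.
Qed.

Lemma lca_le J i j : valid i J -> valid j J ->
  (lca_depth J i j <= depth J i)%nat /\ (lca_depth J i j <= depth J j)%nat.
Proof.
  intros Hi Hj. unfold lca_depth. split; apply fold_le; intros x Hx;
  apply in_map_iff in Hx; destruct Hx as [a [Ha Hin]]; subst;
  apply filter_In in Hin; destruct Hin as [_ Hb]; apply andb_prop in Hb; destruct Hb;
  apply depth_mono; auto.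
Qed.

Lemma lca_diag J p : valid p J -> lca_depth J p p = depth J p.
Proof.
  intros HV. apply Nat.le_antisymm. apply (lca_le J p p HV HV).
  unfold lca_depth. apply fold_ge. apply in_map. apply filter_In. split.
  apply in_seq; lia. rewrite anc_refl; reflexivity.
Qed.

Lemma lca_zero J i : lca_depth J i 0 = 0%nat.
Proof.
  assert (lca_depth J i 0 <= 0)%nat; [|lia].
  unfold lca_depth. apply fold_le. intros x Hx.
  apply in_map_iff in Hx; destruct Hx as [a [Ha Hin]]; subst.
  apply filter_In in Hin; destruct Hin as [_ Hb]; apply andb_prop in Hb; destruct Hb as [_ Hb].
  rewrite anc_0 in Hb. apply Nat.eqb_eq in Hb. subst. reflexivity.
Qed.

Lemma lca_sym_le J i j : valid j J -> (i <= j)%nat -> lca_depth J j i = lca_depth J i j.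
Proof.
  intros HV Hij. unfold lca_depth.
  replace (S j) with (S i + (j - i))%nat by lia. rewrite seq_app, filter_app.
  assert (E : filter (fun a => (is_anc J a (S i + (j - i) - 1) && is_anc J a i)%bool) (seq (0 + S i) (j - i)) = nil).
  { rewrite <- (filter_false (seq (0 + S i) (j - i))). apply filter_ext_in.
    intros a Ha. apply in_seq in Ha. destruct (is_anc J a i) eqn:E.
    - apply anc_le in E; [lia|]. apply (valid_le j); auto; lia.
    - apply Bool.andb_false_r. }
  replace (S i + (j - i) - 1)%nat with j in E by lia.
  rewrite E, app_nil_r. f_equal. f_equal. apply filter_ext. intros; apply Bool.andb_comm.
Qed.

Lemma lca_sym J i j : valid i J -> valid j J -> lca_depth J j i = lca_depth J i j.
Proof.
  intros Hi Hj. destruct (Nat.le_ge_cases i j).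
  - apply lca_sym_le; auto.
  - symmetry. apply lca_sym_le; auto.
Qed.

Lemma lca_upd m J p i j : valid m J -> (i <= m)%nat -> (j <= m)%nat ->
  lca_depth (upd J (S m) p) i j = lca_depth J i j.
Proof.
  intros HV Hi Hj. unfold lca_depth.
  rewrite (filter_ext_in _ (fun a => (is_anc J a i && is_anc J a j)%bool)).
  - apply f_equal. apply map_ext_in. intros a Ha. apply filter_In in Ha. destruct Ha as [Ha _].
    apply in_seq in Ha. apply depth_upd; auto; lia.
  - intros a Ha. rewrite !anc_upd; auto.
Qed.

Lemma lca_new m J p i : valid m J -> (p <= m)%nat -> (i <= m)%nat ->
  lca_depth (upd J (S m) p) i (S m) = lca_depth J i p.
Proof.
  intros HV Hp Hi. unfold lca_depth.
  rewrite (filter_ext_in _ (fun a => (is_anc J a i && is_anc J a p)%bool)).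
  - apply f_equal. apply map_ext_in. intros a Ha. apply filter_In in Ha. destruct Ha as [Ha _].
    apply in_seq in Ha. apply depth_upd; auto; lia.
  - intros a Ha. apply in_seq in Ha. rewrite anc_new, anc_upd; auto.
    destruct (Nat.eqb_spec a (S m)); [lia|]. reflexivity.
Qed.

Lemma rsum_ext n f g : (forall i, (i < n)%nat -> f i = g i) -> rsum n f = rsum n g.
Proof. induction n; intros H; simpl; [reflexivity|]. rewrite IHn, H; auto. Qed.

Lemma rsum_plus n f g : rsum n (fun i => f i + g i) = rsum n f + rsum n g.
Proof. induction n; simpl; [lra|]. rewrite IHn; lra. Qed.

Lemma rsum_scal n c f : rsum n (fun i => c * f i) = c * rsum n f.
Proof. induction n; simpl; [lra|]. rewrite IHn; lra. Qed.

Lemma rsum_const n c : rsum n (fun _ => c) = INR n * c.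
Proof. induction n; simpl rsum; [simpl; lra|]. rewrite IHn, S_INR; lra. Qed.

Lemma rsum_shift n f : rsum (S n) f = f 0%nat + rsum n (fun i => f (S i)).
Proof. induction n; simpl in *; [lra|]. rewrite IHn; lra. Qed.

Lemma pJ_sum theta m g : 0 < theta ->
  rsum (S m) (fun p => pJ theta (S m) p * g p)
  = ((theta - 1) * g 0%nat + rsum (S m) g) / (theta + INR m).
Proof.
  intros Ht. assert (0 <= INR m) by apply pos_INR.
  rewrite !rsum_shift. unfold pJ. simpl Nat.eqb.
  rewrite (rsum_ext m _ (fun i => / (theta + INR m) * g (S i))).
  - rewrite rsum_scal. rewrite S_INR. field. lra.
  - intros i _. simpl Nat.eqb. rewrite S_INR. field. lra.
Qed.

Lemma double_sum N (f : nat -> nat -> R) :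
  (forall i j, (i < N)%nat -> (j < N)%nat -> f i j = f j i) ->
  rsum N (fun p => rsum N (fun i => f i p))
  = 2 * rsum N (fun j => rsum j (fun i => f i j)) + rsum N (fun k => f k k).
Proof.
  induction N; intros Hs; simpl; [lra|].  
  rewrite (rsum_plus N (fun p => rsum N (fun i => f i p)) (fun p => f N p)). rewrite IHN by (intros; apply Hs; lia).
  rewrite (rsum_ext N (fun p => f N p) (fun p => f p N)) by (intros; apply Hs; lia).
  lra.
Qed.

Lemma Tn_new m J p : valid m J -> (p <= m)%nat ->
  Tn (S (S m)) (upd J (S m) p) = Tn (S m) J + 1 + INR (depth J p).
Proof.
  intros HV Hp. unfold Tn. change (rsum (S (S m)) ?f) with (rsum (S m) f + f (S m)); cbv beta.
  rewrite depth_new, S_INR by auto.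
  rewrite (rsum_ext (S m) _ (fun k => INR (depth J k))) by (intros; rewrite depth_upd; auto; lia).
  lra.
Qed.

Lemma Rn_new m J p : valid m J -> (p <= m)%nat ->
  Rn (S (S m)) (upd J (S m) p) = Rn (S m) J + rsum (S m) (fun i => INR (lca_depth J i p)).
Proof.
  intros HV Hp. unfold Rn. change (rsum (S (S m)) ?f) with (rsum (S m) f + f (S m)); cbv beta.
  f_equal.
  - apply rsum_ext. intros j Hj. apply rsum_ext. intros i Hi. rewrite lca_upd; auto; lia.
  - apply rsum_ext. intros i Hi. rewrite lca_new; auto; lia.
Qed.

Lemma condE_T m J theta : 0 < theta -> valid m J ->
  condE theta (S (S m)) (Tn (S (S m))) J
  = (theta + INR m + 1) / (theta + INR m) * Tn (S m) J + 1.
Proof.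
  intros Ht HV. unfold condE. replace (S (S m) - 1)%nat with (S m) by lia.
  rewrite (rsum_ext (S m) _ (fun p => pJ theta (S m) p * (Tn (S m) J + 1 + INR (depth J p))))
    by (intros; rewrite Tn_new; auto; lia).
  rewrite pJ_sum by auto. rewrite rsum_plus, rsum_const. rewrite depth_0.
  change (rsum (S m) (fun i => INR (depth J i))) with (Tn (S m) J).
  assert (0 <= INR m) by apply pos_INR. rewrite S_INR. simpl INR. field. lra.
Qed.

Lemma condE_R m J theta : 0 < theta -> valid m J ->
  condE theta (S (S m)) (Rn (S (S m))) J
  = (theta + INR m + 2) / (theta + INR m) * Rn (S m) J + 1 / (theta + INR m) * Tn (S m) J.
Proof.
  intros Ht HV. unfold condE. replace (S (S m) - 1)%nat with (S m) by lia.
  rewrite (rsum_ext (S m) _ (fun p => pJ theta (S m) p *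
     (Rn (S m) J + rsum (S m) (fun i => INR (lca_depth J i p)))))
    by (intros; rewrite Rn_new; auto; lia).
  rewrite pJ_sum by auto. rewrite rsum_plus, rsum_const.
  rewrite (rsum_ext (S m) (fun i => INR (lca_depth J i 0)) (fun _ => 0))
    by (intros; rewrite lca_zero; reflexivity).
  rewrite rsum_const.
  rewrite double_sum.
  2:{ intros i j Hi Hj. rewrite lca_sym; auto; apply (valid_le m); auto; lia. }
  rewrite (rsum_ext (S m) (fun k => INR (lca_depth J k k)) (fun k => INR (depth J k)))
    by (intros; rewrite lca_diag; auto; apply (valid_le m); auto; lia).
  change (rsum (S m) (fun k => INR (depth J k))) with (Tn (S m) J).
  change (rsum (S m) (fun j => rsum j (fun i => INR (lca_depth J i j)))) with (Rn (S m) J).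
  assert (0 <= INR m) by apply pos_INR. rewrite S_INR. field. lra.
Qed.

Lemma tdist_R J i j : valid i J -> valid j J ->
  INR (tdist J i j) = INR (depth J i) + INR (depth J j) - 2 * INR (lca_depth J i j).
Proof.
  intros Hi Hj. destruct (lca_le J i j Hi Hj) as [H1 H2]. unfold tdist.
  rewrite plus_INR, !minus_INR by auto. lra.
Qed.

Lemma W_TR N J : valid N J -> forall n, (n <= S N)%nat ->
  Wn n J = (INR n - 1) * Tn n J - 2 * Rn n J.
Proof.
  intros HV. induction n; intros Hn.
  - unfold Wn, Tn, Rn. simpl. lra.
  - unfold Wn, Tn, Rn in *. simpl rsum. rewrite IHn by lia.
    rewrite (rsum_ext n (fun i => INR (tdist J i n)) (fun i => INR (depth J i) + INR (depth J n) - 2 * INR (lca_depth J i n))).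
    2:{ intros i Hi. apply tdist_R; apply (valid_le N); auto; lia. }
    rewrite (rsum_ext n (fun i => INR (depth J i) + INR (depth J n) - 2 * INR (lca_depth J i n)) (fun i => (INR (depth J i) + INR (depth J n)) + (-2) * INR (lca_depth J i n)))
      by (intros; lra).
    rewrite rsum_plus, rsum_plus, rsum_scal, rsum_const. rewrite S_INR. lra.
Qed.

Lemma W_TU N J n : valid N J -> (n <= S N)%nat -> Wn n J = INR n * Tn n J - Un n J.
Proof. intros HV Hn. rewrite (W_TR N J HV n Hn). unfold Un. lra. Qed.

Lemma condE_lin theta n F G a J :
  condE theta n (fun J => a * F J - G J) J = a * condE theta n F J - condE theta n G J.
Proof.
  unfold condE.
  rewrite (rsum_ext _ _ (fun i => a * (pJ theta (n-1) i * F (upd J (n-1) i)) + (-1) * (pJ theta (n-1) i * G (upd J (n-1) i)))) by (intros; lra).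
  rewrite rsum_plus, !rsum_scal. lra.
Qed.

Lemma condE_ext theta n F G J : (forall i, (i < n - 1)%nat -> F (upd J (n-1) i) = G (upd J (n-1) i)) ->
  condE theta n F J = condE theta n G J.
Proof. intros H. unfold condE. apply rsum_ext. intros i Hi. rewrite H; auto. Qed.

Lemma condE_all theta (Ht : 0 < theta) m J : valid m J ->
  let n := S (S m) in
     condE theta n (Tn n) J
       = (theta + INR n - 1) / (theta + INR n - 2) * Tn (n - 1) J + 1
  /\ condE theta n (Rn n) J
       = (theta + INR n) / (theta + INR n - 2) * Rn (n - 1) J
         + 1 / (theta + INR n - 2) * Tn (n - 1) J
  /\ condE theta n (Un n) J
       = (theta + INR n) / (theta + INR n - 2) * Un (n - 1) J
         + 1 / (theta + INR n - 2) * Tn (n - 1) J + 1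
  /\ condE theta n (Wn n) J
       = (theta + INR n) / (theta + INR n - 2) * Wn (n - 1) J
         + (theta - 1) / (theta + INR n - 2) * Tn (n - 1) J + (INR n - 1).
Proof.
  intros HV n. subst n. replace (S (S m) - 1)%nat with (S m) by lia.
  assert (0 <= INR m) by apply pos_INR.
  rewrite !S_INR.
  assert (ET := condE_T m J theta Ht HV). assert (ER := condE_R m J theta Ht HV).
  assert (EU : condE theta (S (S m)) (Un (S (S m))) J =
     condE theta (S (S m)) (Tn (S (S m))) J + 2 * condE theta (S (S m)) (Rn (S (S m))) J).
  { unfold condE, Un. rewrite <- rsum_scal, <- rsum_plus. apply rsum_ext. intros; lra. }
  assert (EW : condE theta (S (S m)) (Wn (S (S m))) J =
     INR (S (S m)) * condE theta (S (S m)) (Tn (S (S m))) J - condE theta (S (S m)) (Un (S (S m))) J).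
  { rewrite <- condE_lin. apply condE_ext. intros i Hi. replace (S (S m) - 1)%nat with (S m) in * by lia.
    apply (W_TU (S m)). apply valid_upd; auto; lia. lia. }
  rewrite (W_TU m J (S m)) by (auto; lia).
  rewrite !S_INR in EW. unfold Un in *.
  split; [|split; [|split]].
  - rewrite ET. field. lra.
  - rewrite ER. field. lra.
  - rewrite EU, ET, ER. field. lra.
  - rewrite EW, EU, ET, ER. rewrite S_INR. field. lra.
Qed.

Lemma valid_0 J : valid 0 J.
Proof. intros k Hk; lia. Qed.

Lemma Ex_ext theta m : forall F G, (forall J, valid m J -> F J = G J) -> Ex theta m F = Ex theta m G.
Proof.
  induction m; intros F G H; cbn [Ex].
  - apply H, valid_0.
  - apply IHm. intros J HV. apply rsum_ext. intros i Hi. rewrite H; auto.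
    apply valid_upd; auto; lia.
Qed.

Lemma pJ_total theta m : 0 < theta -> rsum (S m) (fun p => pJ theta (S m) p) = 1.
Proof.
  intros Ht. rewrite (rsum_ext _ _ (fun p => pJ theta (S m) p * 1)) by (intros; lra).
  rewrite pJ_sum, rsum_const by auto. rewrite S_INR. assert (0 <= INR m) by apply pos_INR.
  field. lra.
Qed.

Lemma Ex_lin theta (Ht : 0 < theta) m : forall F G a b c,
  Ex theta m (fun J => a * F J + b * G J + c) = a * Ex theta m F + b * Ex theta m G + c.
Proof.
  induction m; intros F G a b c; cbn [Ex]; [reflexivity|].
  rewrite <- IHm. apply Ex_ext. intros J _.
  rewrite (rsum_ext _ _ (fun i => a * (pJ theta (S m) i * F (upd J (S m) i)) +
     b * (pJ theta (S m) i * G (upd J (S m) i)) + c * pJ theta (S m) i)) by (intros; lra).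
  rewrite !rsum_plus, !rsum_scal, pJ_total by auto. lra.
Qed.

Lemma Ex_step theta m F : Ex theta (S m) F = Ex theta m (condE theta (S (S m)) F).
Proof. reflexivity. Qed.

Lemma h_S theta k : (1 <= k)%nat -> h theta (S k) = h theta k + 1 / (theta + INR k).
Proof.
  intros Hk. destruct k as [|k]; [lia|]. unfold h.
  replace (S (S k) - 1)%nat with (S k) by lia. replace (S k - 1)%nat with k by lia.
  reflexivity.
Qed.

Lemma h_1 theta : h theta 1 = 0.
Proof. reflexivity. Qed.

Lemma ET_formula theta (Ht : 0 < theta) : forall k,
  Ex theta k (Tn (S k)) = (theta + INR k) * h theta (S k).
Proof.
  induction k.
  - simpl. unfold Tn. simpl. rewrite h_1. lra.
  - rewrite Ex_step.
    rewrite (Ex_ext _ _ _ (fun J => (theta + INR k + 1) / (theta + INR k) * Tn (S k) J + 0 * Tn (S k) J + 1)).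
    2:{ intros J HV. rewrite condE_T by auto. ring. }
    rewrite Ex_lin, IHk by auto. rewrite (h_S theta (S k)) by lia. rewrite S_INR.
    assert (0 <= INR k) by apply pos_INR. field. lra.
Qed.

Lemma EU_formula theta (Ht : 0 < theta) : forall k,
  Ex theta (S k) (Un (S (S k)))
  = (theta + INR (S (S k))) * (theta + INR (S (S k)) - 1) *
         (2 / (1 + theta) - 1 / (theta + INR (S (S k)) - 1)
          - 1 / (theta + INR (S (S k))) * (1 + h theta (S k))).
Proof.
  assert (step : forall m, Ex theta (S m) (Un (S (S m))) =
     (theta + INR m + 2) / (theta + INR m) * Ex theta m (Un (S m))
     + 1 / (theta + INR m) * Ex theta m (Tn (S m)) + 1).
  { intros m. rewrite Ex_step. rewrite <- Ex_lin by auto. apply Ex_ext. intros J HV.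
    destruct (condE_all theta Ht m J HV) as [_ [_ [HU _]]]. cbv zeta in HU.
    rewrite HU. replace (S (S m) - 1)%nat with (S m) by lia. rewrite !S_INR. field.
    assert (0 <= INR m) by apply pos_INR. lra. }
  induction k.
  - rewrite step. simpl Ex. unfold Un, Tn, Rn. simpl rsum. rewrite h_1.
    simpl INR. field. lra.
  - rewrite step, IHk, ET_formula by auto. rewrite (h_S theta (S k)) by lia.
    rewrite !S_INR. assert (0 <= INR k) by apply pos_INR. field. lra.
Qed.

Lemma EW_formula theta (Ht : 0 < theta) k :
  Ex theta (S k) (Wn (S (S k))) = INR (S (S k)) * Ex theta (S k) (Tn (S (S k))) - Ex theta (S k) (Un (S (S k))).
Proof.
  rewrite (Ex_ext _ _ _ (fun J => INR (S (S k)) * Tn (S (S k)) J + (-1) * Un (S (S k)) J + 0)).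
  - rewrite Ex_lin by auto. ring.
  - intros J HV. rewrite (W_TU (S k)) by auto. ring.
Qed.

Lemma ln_le_xm1 y : 0 < y -> ln y <= y - 1.
Proof. intros Hy. pose proof (exp_ineq1_le (ln y)). rewrite exp_ln in H by auto. lra. Qed.

Lemma div_le a b c d : 0 < b -> 0 < d -> a * d <= c * b -> a / b <= c / d.
Proof.
  intros Hb Hd H.
  replace (a / b) with ((a * d) * / (b * d)) by (field; lra).
  replace (c / d) with ((c * b) * / (b * d)) by (field; lra).
  apply Rmult_le_compat_r; auto. left. apply Rinv_0_lt_compat. nra.
Qed.

Lemma ln_div x y : 0 < x -> 0 < y -> ln (x / y) = ln x - ln y.
Proof. intros. unfold Rdiv. rewrite ln_mult, ln_Rinv; try apply Rinv_0_lt_compat; auto. Qed.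

Lemma ln_diff u : 1 <= u -> 1 / (u + 1) <= ln (u + 1) - ln u <= 1 / u.
Proof.
  intros Hu. split.
  - pose proof (ln_le_xm1 (u / (u + 1))). rewrite ln_div in H by lra.
    assert (u / (u + 1) - 1 = - (1 / (u + 1))) by (field; lra).
    assert (0 < u / (u+1)) by (apply Rdiv_lt_0_compat; lra). lra.
  - pose proof (ln_le_xm1 ((u + 1) / u)). rewrite ln_div in H by lra.
    assert ((u + 1) / u - 1 = 1 / u) by (field; lra).
    assert (0 < (u + 1) / u) by (apply Rdiv_lt_0_compat; lra). lra.
Qed.

Definition aseq (x : R) (N : nat) : R := ln (INR N) - rsum N (fun k => / (x + INR k)).

Lemma aseq_step x N : 0 < x -> (1 <= N)%nat ->
  Rabs (aseq x (S N) - aseq x N) <= (2 * x + 1) * (1 / INR N - 1 / INR (S N)).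
Proof.
  intros Hx HN. unfold aseq. simpl rsum. rewrite S_INR.
  assert (Hu : 1 <= INR N) by (apply (le_INR 1); auto).
  set (u := INR N) in *. destruct (ln_diff u Hu) as [L1 L2].
  assert (E1 : (2 * x + 1) * (1 / u - 1 / (u + 1)) = (2 * x + 1) / (u * (u + 1))) by (field; lra).
  rewrite E1. apply Rabs_le. split.
  - assert (1 / (u + 1) - / (x + u) >= - ((2 * x + 1) / (u * (u + 1)))); [|lra].
    assert (/ (x + u) <= 1 / u). { unfold Rdiv. rewrite Rmult_1_l. apply Rinv_le_contravar; lra. }
    assert (1 / (u+1) - 1/u = - (1 / (u * (u + 1)))) by (field; lra).
    assert (1 / (u * (u + 1)) <= (2 * x + 1) / (u * (u + 1))).
    { apply div_le; nra. }
    lra.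
  - assert (1 / u - / (x + u) <= (2 * x + 1) / (u * (u + 1))); [|lra].
    replace (1 / u - / (x + u)) with (x / (u * (x + u))) by (field; lra).
    apply div_le; nra.
Qed.

Lemma aseq_tel x N : 0 < x -> (1 <= N)%nat -> forall k,
  Rabs (aseq x (N + k) - aseq x N) <= (2 * x + 1) * (1 / INR N - 1 / INR (N + k)).
Proof.
  intros Hx HN. induction k.
  - rewrite Nat.add_0_r. replace (aseq x N - aseq x N) with 0 by ring. rewrite Rabs_R0. lra.
  - rewrite Nat.add_succ_r.
    pose proof (aseq_step x (N + k) Hx ltac:(lia)).
    pose proof (Rabs_triang (aseq x (S (N + k)) - aseq x (N + k)) (aseq x (N + k) - aseq x N)).
    replace (aseq x (S (N + k)) - aseq x (N + k) + (aseq x (N + k) - aseq x N))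
      with (aseq x (S (N + k)) - aseq x N) in H0 by ring.
    lra.
Qed.

Lemma aseq_bound x N M : 0 < x -> (1 <= N)%nat -> (N <= M)%nat ->
  Rabs (aseq x M - aseq x N) <= (2 * x + 1) / INR N.
Proof.
  intros Hx HN HM. replace M with (N + (M - N))%nat by lia.
  pose proof (aseq_tel x N Hx HN (M - N)).
  assert (0 < INR (N + (M - N))) by (apply lt_0_INR; lia).
  assert (0 < 1 / INR (N + (M - N))) by (apply Rdiv_lt_0_compat; lra).
  replace ((2 * x + 1) / INR N) with ((2 * x + 1) * (1 / INR N)) by (field; apply not_0_INR; lia).
  nra.
Qed.

Lemma aseq_cauchy x : 0 < x -> Cauchy_crit (aseq x).
Proof.
  intros Hx eps He.
  destruct (INR_unbounded (2 * (2 * x + 1) / eps)) as [N0 HN0].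
  exists (S N0). intros n m Hn Hm. unfold R_dist.
  pose proof (aseq_bound x (S N0) n Hx ltac:(lia) Hn).
  pose proof (aseq_bound x (S N0) m Hx ltac:(lia) Hm).
  pose proof (Rabs_triang (aseq x n - aseq x (S N0)) (aseq x (S N0) - aseq x m)).
  replace (aseq x n - aseq x (S N0) + (aseq x (S N0) - aseq x m)) with (aseq x n - aseq x m) in H1 by ring.
  rewrite Rabs_minus_sym in H0.
  assert (2 * ((2 * x + 1) / INR (S N0)) < eps); [|lra].
  rewrite S_INR. assert (0 <= INR N0) by apply pos_INR.
  assert (2 * (2 * x + 1) < eps * INR N0).
  { apply (Rmult_lt_compat_r eps) in HN0; auto.
    replace (2 * (2 * x + 1) / eps * eps) with (2 * (2 * x + 1)) in HN0 by (field; lra). lra. }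
  replace (2 * ((2 * x + 1) / (INR N0 + 1))) with ((2 * (2 * x + 1)) / (INR N0 + 1)) by (field; lra).
  apply (Rmult_lt_reg_r (INR N0 + 1)); [lra|].
  replace (2 * (2 * x + 1) / (INR N0 + 1) * (INR N0 + 1)) with (2 * (2 * x + 1)) by (field; lra).
  nra.
Qed.

Lemma Psi_cv x : 0 < x -> Un_cv (aseq x) (Psi x).
Proof.
  intros Hx. unfold Psi. apply epsilon_spec.
  destruct (R_complete (aseq x) (aseq_cauchy x Hx)) as [l Hl]. exists l. exact Hl.
Qed.

Lemma lim_bound u l c B : Un_cv u l -> (exists N, forall M, (M >= N)%nat -> Rabs (u M - c) <= B) ->
  Rabs (l - c) <= B.
Proof.
  intros Hu [N HN]. destruct (Rle_or_lt (Rabs (l - c)) B) as [H|H]; auto.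
  exfalso. destruct (Hu (Rabs (l - c) - B)) as [N1 HN1]; [lra|].
  specialize (HN1 (Nat.max N N1) ltac:(lia)). specialize (HN (Nat.max N N1) ltac:(lia)).
  unfold R_dist in HN1.
  pose proof (Rabs_triang (l - u (Nat.max N N1)) (u (Nat.max N N1) - c)).
  replace (l - u (Nat.max N N1) + (u (Nat.max N N1) - c)) with (l - c) in H0 by ring.
  rewrite Rabs_minus_sym in HN1. lra.
Qed.

Lemma Psi_bound x N : 0 < x -> (1 <= N)%nat -> Rabs (Psi x - aseq x N) <= (2 * x + 1) / INR N.
Proof.
  intros Hx HN. apply (lim_bound (aseq x)). apply Psi_cv; auto.
  exists N. intros M HM. apply aseq_bound; auto.
Qed.

Lemma h_aseq theta k : h theta (S k) = ln (INR k) - aseq (theta + 1) k.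
Proof.
  unfold aseq, h. replace (S k - 1)%nat with k by lia.
  assert (rsum k (fun j => 1 / (theta + INR (S j))) = rsum k (fun j => / (theta + 1 + INR j))).
  { apply rsum_ext. intros. rewrite S_INR. unfold Rdiv. rewrite Rmult_1_l. f_equal. ring. }
  rewrite H. ring.
Qed.

Lemma h_est theta k : 0 < theta -> (1 <= k)%nat ->
  Rabs (h theta (S k) - ln (INR (S k)) + Psi (theta + 1)) <= (2 * theta + 4) / INR k.
Proof.
  intros Ht Hk. rewrite h_aseq, S_INR.
  assert (Hu : 1 <= INR k) by (apply (le_INR 1); auto).
  destruct (ln_diff (INR k) Hu) as [L1 L2].
  pose proof (Psi_bound (theta + 1) k ltac:(lra) Hk).
  pose proof (Rabs_triang (ln (INR k) - ln (INR k + 1)) (Psi (theta + 1) - aseq (theta + 1) k)).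
  replace (ln (INR k) - ln (INR k + 1) + (Psi (theta + 1) - aseq (theta + 1) k))
    with (ln (INR k) - aseq (theta + 1) k - ln (INR k + 1) + Psi (theta + 1)) in H0 by ring.
  rewrite (Rabs_left1 (ln (INR k) - ln (INR k + 1))) in H0 by (assert (0 < 1 / (INR k + 1)) by (apply Rdiv_lt_0_compat; lra); lra).
  replace ((2 * theta + 4) / INR k) with (1 / INR k + (2 * (theta + 1) + 1) / INR k) by (field; lra).
  lra.
Qed.

Lemma ln_abs N : 1 <= N -> Rabs (ln N) <= N.
Proof.
  intros HN. pose proof (ln_le_xm1 N ltac:(lra)).
  pose proof (ln_le_xm1 (/ N) ltac:(apply Rinv_0_lt_compat; lra)).
  rewrite ln_Rinv in H0 by lra.
  assert (/ N <= 1). { rewrite <- Rinv_1. apply Rinv_le_contravar; lra. }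
  apply Rabs_le; lra.
Qed.

Lemma bnd A B c' t M N X Y c : 1 <= N -> Rabs X <= N -> Rabs Y <= M -> 0 <= t -> t <= c * N -> 0 <= c ->
  Rabs (A + B * N + c' * X + t * Y) <= (Rabs A + Rabs B + Rabs c' + c * M) * N.
Proof.
  intros HN HX HY Ht HtN Hc.
  assert (0 <= M) by (pose proof (Rabs_pos Y); lra).
  pose proof (Rabs_triang (A + B * N + c' * X) (t * Y)).
  pose proof (Rabs_triang (A + B * N) (c' * X)).
  pose proof (Rabs_triang A (B * N)).
  rewrite Rabs_mult in H0, H1, H2. rewrite (Rabs_pos_eq N) in H2 by lra.
  rewrite (Rabs_pos_eq t) in H0 by lra.
  pose proof (Rabs_pos A). pose proof (Rabs_pos c'). pose proof (Rabs_pos Y).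
  assert (Rabs A <= Rabs A * N) by nra.
  assert (Rabs c' * Rabs X <= Rabs c' * N) by nra.
  assert (t * Rabs Y <= c * N * M) by nra.
  nra.
Qed.

Definition CT theta := (theta + 1) * (2 * theta + 4) + Rabs (1 - theta) * Rabs (Psi (theta + 1)).

Lemma T_asym theta k : 0 < theta -> (1 <= k)%nat ->
  Rabs (Ex theta k (Tn (S k))
     - (INR (S k) * ln (INR (S k)) - Psi (theta + 1) * INR (S k) + (theta - 1) * ln (INR (S k))))
  <= CT theta.
Proof.
  intros Ht Hk. rewrite ET_formula by auto.
  pose proof (h_est theta k Ht Hk).
  set (e := h theta (S k) - ln (INR (S k)) + Psi (theta + 1)) in *.
  replace (h theta (S k)) with (e + ln (INR (S k)) - Psi (theta + 1)) by (unfold e; ring).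
  rewrite S_INR.
  replace ((theta + INR k) * (e + ln (INR k + 1) - Psi (theta + 1)) -
    ((INR k + 1) * ln (INR k + 1) - Psi (theta + 1) * (INR k + 1) + (theta - 1) * ln (INR k + 1)))
    with ((theta + INR k) * e + (1 - theta) * Psi (theta + 1)) by ring.
  assert (Hu : 1 <= INR k) by (apply (le_INR 1); auto).
  pose proof (Rabs_triang ((theta + INR k) * e) ((1 - theta) * Psi (theta + 1))).
  rewrite !Rabs_mult in H0. rewrite (Rabs_pos_eq (theta + INR k)) in H0 by lra.
  unfold CT.
  assert ((theta + INR k) * Rabs e <= (theta + 1) * (2 * theta + 4)); [|lra].
  apply (Rle_trans _ ((theta + INR k) * ((2 * theta + 4) / INR k))).
  - apply Rmult_le_compat_l; lra.
  - replace ((theta + INR k) * ((2 * theta + 4) / INR k)) with ((2 * theta + 4) * (1 + theta / INR k))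
      by (field; lra).
    assert (theta / INR k <= theta).
    { unfold Rdiv. rewrite <- (Rmult_1_r theta) at 2. apply Rmult_le_compat_l; [lra|].
      rewrite <- Rinv_1. apply Rinv_le_contravar; lra. }
    nra.
Qed.

Definition UA theta := 2 * (theta * theta - theta) / (1 + theta) - 2 * theta + 2.
Definition UB theta := 2 * (2 * theta - 1) / (1 + theta) - 2.
Definition CU theta := Rabs (UA theta) + Rabs (UB theta) + Rabs (1 - theta)
   + (theta + 1) * (Rabs (Psi (theta + 1)) + (2 * theta + 4)).

Lemma U_asym theta k : 0 < theta ->
  Rabs (Ex theta (S k) (Un (S (S k)))
           - (2 / (1 + theta) * INR (S (S k)) ^ 2 - INR (S (S k)) * ln (INR (S (S k)))))
  <= CU theta * INR (S (S k)).
Proof.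
  intros Ht. rewrite EU_formula by auto.
  replace (h theta (S k)) with (h theta (S (S k)) - 1 / (theta + INR (S k)))
    by (rewrite (h_S theta (S k)) by lia; ring).
  assert (Hk : (1 <= S k)%nat) by lia.
  pose proof (h_est theta (S k) Ht Hk).
  set (e := h theta (S (S k)) - ln (INR (S (S k))) + Psi (theta + 1)) in *.
  replace (h theta (S (S k))) with (e + ln (INR (S (S k))) - Psi (theta + 1)) by (unfold e; ring).
  set (L := ln (INR (S (S k)))) in *.
  assert (Hu : 1 <= INR (S k)) by (apply (le_INR 1); auto).
  assert (HeB : Rabs e <= 2 * theta + 4).
  { apply (Rle_trans _ _ _ H). unfold Rdiv. rewrite <- (Rmult_1_r (2 * theta + 4)) at 2.
    apply Rmult_le_compat_l; [lra|]. rewrite <- Rinv_1. apply Rinv_le_contravar; lra. }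
  assert (HL : Rabs L <= INR (S (S k))).
  { apply ln_abs. rewrite S_INR. lra. }
  rewrite (S_INR (S k)) in *. set (u := INR (S k)) in *.
  replace ((theta + (u + 1)) * (theta + (u + 1) - 1) *
     (2 / (1 + theta) - 1 / (theta + (u + 1) - 1) -
      1 / (theta + (u + 1)) * (1 + (e + L - Psi (theta + 1) - 1 / (theta + u)))) -
     (2 / (1 + theta) * (u + 1) ^ 2 - (u + 1) * L))
    with (UA theta + UB theta * (u + 1) + (1 - theta) * L + (theta + u) * (Psi (theta + 1) - e))
    by (unfold UA, UB; field; lra).
  unfold CU. apply bnd; try lra.
  - pose proof (Rabs_triang (Psi (theta + 1)) (- e)). rewrite Rabs_Ropp in H0. unfold Rminus. lra.
  - nra.
Qed.

Theorem mainTheorem5 (theta : R) (Htheta : 0 < theta) :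
  (forall (n : nat) (J : nat -> nat), (2 <= n)%nat -> valid (n - 2) J ->
     condE theta n (Tn n) J
       = (theta + INR n - 1) / (theta + INR n - 2) * Tn (n - 1) J + 1
  /\ condE theta n (Rn n) J
       = (theta + INR n) / (theta + INR n - 2) * Rn (n - 1) J
         + 1 / (theta + INR n - 2) * Tn (n - 1) J
  /\ condE theta n (Un n) J
       = (theta + INR n) / (theta + INR n - 2) * Un (n - 1) J
         + 1 / (theta + INR n - 2) * Tn (n - 1) J + 1
  /\ condE theta n (Wn n) J
       = (theta + INR n) / (theta + INR n - 2) * Wn (n - 1) J
         + (theta - 1) / (theta + INR n - 2) * Tn (n - 1) J + (INR n - 1))
  /\
  (forall n : nat, (1 <= n)%nat ->
     Ex theta (n - 1) (Tn n) = (theta + INR n - 1) * h theta n)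
  /\
  (forall n : nat, (2 <= n)%nat ->
     Ex theta (n - 1) (Un n)
       = (theta + INR n) * (theta + INR n - 1) *
         (2 / (1 + theta) - 1 / (theta + INR n - 1)
          - 1 / (theta + INR n) * (1 + h theta (n - 1))))
  /\
  (forall n : nat, (2 <= n)%nat ->
     Ex theta (n - 1) (Wn n)
       = (theta + INR n) * (theta + INR n - 1) *
         ((theta - 1) * (1 / (theta + 1) - 1 / (theta + INR n - 1)
                         - h theta (n - 1) / (theta + INR n))
          + h theta n - 1 + (theta + 1) / (theta + INR n)))
  /\
  (exists C N0, forall n : nat, (N0 <= n)%nat ->
     Rabs (Ex theta (n - 1) (Tn n)
           - (INR n * ln (INR n) - Psi (theta + 1) * INR n
              + (theta - 1) * ln (INR n))) <= C)
  /\
  (exists C N0, forall n : nat, (N0 <= n)%nat ->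
     Rabs (Ex theta (n - 1) (Un n)
           - (2 / (1 + theta) * INR n ^ 2 - INR n * ln (INR n))) <= C * INR n)
  /\
  (exists C N0, forall n : nat, (N0 <= n)%nat ->
     Rabs (Ex theta (n - 1) (Wn n)
           - (INR n ^ 2 * ln (INR n)
              - (Psi (theta + 1) + 2 / (theta + 1)) * INR n ^ 2
              + theta * INR n * ln (INR n))) <= C * INR n).
Proof.
  split; [|split; [|split; [|split; [|split; [|split]]]]].
  - intros n J Hn HV. destruct n as [|[|m]]; try lia.
    replace (S (S m) - 2)%nat with m in HV by lia.
    exact (condE_all theta Htheta m J HV).
  - intros n Hn. destruct n as [|k]; [lia|]. replace (S k - 1)%nat with k by lia.
    rewrite ET_formula by auto. rewrite S_INR. ring.
  - intros n Hn. destruct n as [|[|k]]; try lia. replace (S (S k) - 1)%nat with (S k) by lia.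
    apply EU_formula; auto.
  - intros n Hn. destruct n as [|[|k]]; try lia. replace (S (S k) - 1)%nat with (S k) by lia.
    rewrite EW_formula, EU_formula, ET_formula by auto.
    rewrite (h_S theta (S k)) by lia.
    assert (0 <= INR k) by apply pos_INR. rewrite !S_INR. field. lra.
  - exists (CT theta), 2%nat. intros n Hn. destruct n as [|k]; [lia|].
    replace (S k - 1)%nat with k by lia. apply T_asym; auto; lia.
  - exists (CU theta), 2%nat. intros n Hn. destruct n as [|[|k]]; try lia.
    replace (S (S k) - 1)%nat with (S k) by lia. apply U_asym; auto.
  - exists (CT theta + CU theta), 2%nat. intros n Hn. destruct n as [|[|k]]; try lia.
    replace (S (S k) - 1)%nat with (S k) by lia. rewrite EW_formula by auto.
    pose proof (T_asym theta (S k) Htheta ltac:(lia)).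
    pose proof (U_asym theta k Htheta).
    set (N := INR (S (S k))) in *.
    assert (HN : 1 <= N) by (unfold N; rewrite !S_INR; pose proof (pos_INR k); lra).
    set (ET := Ex theta (S k) (Tn (S (S k)))) in *.
    set (EU := Ex theta (S k) (Un (S (S k)))) in *.
    set (L := ln N) in *. set (P := Psi (theta + 1)) in *.
    replace (N * ET - EU - (N ^ 2 * L - (P + 2 / (theta + 1)) * N ^ 2 + theta * N * L))
      with (N * (ET - (N * L - P * N + (theta - 1) * L))
            - (EU - (2 / (1 + theta) * N ^ 2 - N * L))) by (field; lra).
    pose proof (Rabs_triang (N * (ET - (N * L - P * N + (theta - 1) * L)))
                            (- (EU - (2 / (1 + theta) * N ^ 2 - N * L)))).
    rewrite Rabs_Ropp, Rabs_mult, (Rabs_pos_eq N) in H1 by lra.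
    unfold Rminus at 1. nra.
Qed.
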